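(* Let $H$ be a real Hilbert space, $I=\{1,\dots,M\}$, let $f_i,h_i,T_i$ ($i\in I$) satisfy Assumption (A1)–(A4) and the parameters satisfy Condition (C) (described below). Consider the sequences generated by the Distributed Accelerated Parallel Algorithm below, and assume that for each $i\in I$ the sequence $\{y^{(i)}_n\}$ is bounded. Then the sequences $\{T_i(y^{(i)}_n)\}$, $\{x_n\}$, $\{w^{(i)}_n\}$, $\{z_n\}$ and $\{d^{(i)}_n\}$ ($i\in I$) are bounded.
   Context: Assumption (A1): each $f_i:H\to\mathbb{R}$ is continuous and convex. (A2): each $h_i:H\to\mathbb{R}$ is convex and Fréchet differentiable, and $\nabla h_i$ is $(1/L_i)$-Lipschitz continuous for some $L_i>0$. (A3): each $T_i:H\to H$ is firmly nonexpansive, i.e. $\|T_ix-T_iy\|^2\le\langle T_ix-T_iy,x-y\rangle$ for all $x,y$. (A4): $S=\bigcap_{i=1}^M\mathrm{Fix}\,T_i\neq\emptyset$ and, with $\psi=\sum_{i=1}^M(f_i+h_i)$, $\Omega=\{\hat x\in S:\psi(\hat x)=\min_{x\in S}\psi(x)\}\neq\emptyset$. Condition (C): $\{\theta_n\},\{\lambda_n\},\{\beta_n\},\{\alpha_n\}$ are decreasing real sequences converging to $0$ with $\theta_n\in[0,1)$, $\lambda_n\in(0,2\min_{i\in I}L_i]$, $\beta_n\in(0,1]$, $\alpha_n\in(0,1]$, and: (C1) $\sum_n\alpha_n=\infty$; (C2) $\lim_n\frac{1}{\alpha_{n+1}}\big|\frac{1}{\lambda_{n+1}}-\frac{1}{\lambda_n}\big|=0$;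 (C3) $\lim_n\frac{1}{\lambda_{n+1}}\big|1-\frac{\alpha_n}{\alpha_{n+1}}\big|=0$; (C4) $\lim_n\frac{\alpha_n}{\lambda_n}=0$; (C5) $\lim_n\frac{\theta_n}{\alpha_{n+1}\lambda_{n+1}}=0$; (C6) $\frac{\lambda_n}{\lambda_{n+1}}\le\sigma$ for some $\sigma\ge1$; (C7) $\lim_n\frac{\beta_n}{\alpha_{n+1}}=0$. $\mathrm{prox}_{\lambda g}(x)=\arg\min_y\{g(y)+\frac{1}{2\lambda}\|x-y\|^2\}$. Distributed Accelerated Parallel Algorithm: choose $z_0,x_0,x_1\in H$, $u^{(i)}\in H$ and set $d^{(i)}_1=-\nabla h_i(z_0)$ ($i\in I$). For $n=1,2,\dots$: compute $z_n=x_n+\theta_n(x_n-x_{n-1})$; for $i=1,\dots,M$ compute $d^{(i)}_{n+1}=-\nabla h_i(z_n)+\beta_nd^{(i)}_n$, $y^{(i)}_n=\mathrm{prox}_{\lambda_nf_i}(z_n+\lambda_nd^{(i)}_{n+1})$, $w^{(i+1)}_n=\alpha_nu^{(i)}+(1-\alpha_n)T_i(y^{(i)}_n)$; then set $x_{n+1}=\frac1M\sum_{i=1}^Mw^{(i+1)}_n$. *)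

(* Defs.v *)
From HB Require Import structures.
From mathcomp Require Import all_boot all_order all_algebra.
From mathcomp Require Import all_classical all_reals all_analysis.
Set Implicit Arguments. Unset Strict Implicit. Unset Printing Implicit Defensive.
Import Order.TTheory GRing.Theory Num.Theory.
Import numFieldNormedType.Exports.
Local Open Scope classical_set_scope.
Local Open Scope ring_scope.

Section Hilbert.
Variables (R : realType) (H : lmodType R) (ip : H -> H -> R).

Definition inner_product : Prop :=
  [/\ (forall x y, ip x y = ip y x),
      (forall a x y z, ip (a *: x + y) z = a * ip x z + ip y z),
      (forall x, 0 <= ip x x) &
      (forall x, ip x x = 0 -> x = 0)].

Definition hnorm (x : H) : R := Num.sqrt (ip x x).

Definition hcomplete : Prop :=
  forall u : nat -> H,
    (forall e : R, 0 < e -> exists N, forall m n, (N <= m)%N -> (N <= n)%N ->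
        hnorm (u m - u n) < e) ->
    exists l, forall e : R, 0 < e -> exists N, forall n, (N <= n)%N ->
        hnorm (u n - l) < e.

Definition hilbert_space : Prop := inner_product /\ hcomplete.

Definition hcontinuous (f : H -> R) : Prop :=
  forall x (e : R), 0 < e -> exists d : R, 0 < d /\
    forall y, hnorm (y - x) < d -> `|f y - f x| < e.

Definition hconvex (f : H -> R) : Prop :=
  forall x y (t : R), 0 <= t <= 1 ->
    f (t *: x + (1 - t) *: y) <= t * f x + (1 - t) * f y.

Definition frechet_gradient (f : H -> R) (g : H -> H) : Prop :=
  forall x (e : R), 0 < e -> exists d : R, 0 < d /\
    forall v, hnorm v < d -> `|f (x + v) - f x - ip (g x) v| <= e * hnorm v.

Definition lipschitz_with (k : R) (g : H -> H) : Prop :=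
  forall x y, hnorm (g x - g y) <= k * hnorm (x - y).

Definition firmly_nonexpansive (T : H -> H) : Prop :=
  forall x y, hnorm (T x - T y) ^+ 2 <= ip (T x - T y) (x - y).

Definition fixed_point (T : H -> H) (x : H) : Prop := T x = x.

Definition is_prox (lam : R) (f : H -> R) (x p : H) : Prop :=
  forall y, f p + (2 * lam)^-1 * hnorm (x - p) ^+ 2
            <= f y + (2 * lam)^-1 * hnorm (x - y) ^+ 2.

Definition bounded_from (k : nat) (u : nat -> H) : Prop :=
  exists B : R, forall n, (k <= n)%N -> hnorm (u n) <= B.

End Hilbert.

Definition decr_to_0 (R : realType) (a : nat -> R) : Prop :=
  (forall n, (1 <= n)%N -> a n.+1 <= a n) /\ a @ \oo --> (0 : R).

(* Main.v *)
Require Import Defs.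
From HB Require Import structures.
From mathcomp Require Import all_boot all_order all_algebra.
From mathcomp Require Import all_classical all_reals all_analysis.
From mathcomp Require Import lra.
Import Order.TTheory GRing.Theory Num.Theory.
Import numFieldNormedType.Exports.
Local Open Scope classical_set_scope.
Local Open Scope ring_scope.

Section Aux.
Variables (R : realType) (H : lmodType R) (ip : H -> H -> R).
Hypothesis ipS : forall x y, ip x y = ip y x.
Hypothesis ipL : forall a x y z, ip (a *: x + y) z = a * ip x z + ip y z.
Hypothesis ipP : forall x, 0 <= ip x x.

Let Q x := ip x x.

Lemma ip0l z : ip 0 z = 0.
Proof. have := ipL 1 0 0 z. rewrite scaler0 addr0 mul1r => h. by apply: (@addrI _ (ip 0 z)); rewrite addr0 -h. Qed.
Lemma ipDl x y z : ip (x + y) z = ip x z + ip y z.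
Proof. by have := ipL 1 x y z; rewrite scale1r mul1r. Qed.
Lemma ipZl a x z : ip (a *: x) z = a * ip x z.
Proof. by have := ipL a x 0 z; rewrite addr0 ip0l addr0. Qed.
Lemma ipNl x z : ip (- x) z = - ip x z.
Proof. by rewrite -scaleN1r ipZl mulN1r. Qed.
Lemma ipDr x y z : ip z (x + y) = ip z x + ip z y.
Proof. by rewrite ipS ipDl ipS (ipS y). Qed.
Lemma ipZr a x z : ip z (a *: x) = a * ip z x.
Proof. by rewrite ipS ipZl ipS. Qed.
Lemma ipNr x z : ip z (- x) = - ip z x.
Proof. by rewrite ipS ipNl ipS. Qed.

Lemma QD a b : Q (a + b) <= 2 * Q a + 2 * Q b.
Proof.
have := ipP (a - b). rewrite /Q !(ipDl, ipDr, ipNl, ipNr) (ipS b a). lra.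
Qed.
Lemma QZ c a : Q (c *: a) = c ^+ 2 * Q a.
Proof. by rewrite /Q ipZl ipZr mulrA expr2. Qed.
Lemma QN a : Q (- a) = Q a.
Proof. by rewrite /Q ipNl ipNr opprK. Qed.
Lemma Q0 : Q 0 = 0.
Proof. by rewrite /Q ip0l. Qed.
Lemma ip_le a b : 2 * ip a b <= Q a + Q b.
Proof. have := ipP (a - b). rewrite /Q !(ipDl, ipDr, ipNl, ipNr) (ipS b a). lra. Qed.

Lemma QB {a b C D} : Q a <= C -> Q b <= D -> Q (a + b) <= 2 * C + 2 * D.
Proof. move=> ha hb; apply: le_trans (QD a b) _; lra. Qed.

Definition bQ k (u : nat -> H) := exists C, forall n, (k <= n)%N -> Q (u n) <= C.

Lemma bQ_bounded k u : bQ k u -> bounded_from ip k u.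
Proof.
move=> [C hC]; exists (Num.sqrt C) => n kn; rewrite /hnorm.
have := hC n kn; rewrite /Q => h; rewrite ler_sqrt //; exact: le_trans (ipP _) h.
Qed.

Lemma bounded_bQ k u : bounded_from ip k u -> bQ k u.
Proof.
move=> [B hB]; exists (B ^+ 2) => n kn; have := hB n kn; rewrite /hnorm => h.
have h0 : 0 <= Num.sqrt (ip (u n) (u n)) by [].
rewrite /Q -(sqr_sqrtr (ipP (u n))). rewrite lerXn2r // ?nnegrE //. exact: le_trans h.
Qed.

Lemma finite_bQ (u : nat -> H) N : exists C, forall n, (n <= N)%N -> Q (u n) <= C.
Proof.
elim: N => [|N [C hC]]; first by exists (Q (u 0%N)) => n; rewrite leqn0 => /eqP ->.
exists (Num.max C (Q (u N.+1))) => n; rewrite leq_eqVlt => /orP [/eqP ->|].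
  by rewrite le_max lexx orbT.
by rewrite ltnS => /hC h; rewrite le_max h.
Qed.

Lemma bQ_shift k m u : bQ k u -> bQ m u.
Proof.
move=> [C hC]; have [D hD] := finite_bQ u k.
exists (Num.max C D) => n _; case: (leqP k n) => kn.
  by rewrite le_max hC.
by rewrite le_max hD ?orbT // ltnW.
Qed.

Lemma Qsum (I : Type) C (F : I -> H) (r : seq I) : 0 <= C -> (forall i, Q (F i) <= C) ->
  Q (\sum_(i <- r) F i) <= (4 ^+ size r) * C.
Proof.
move=> C0 hF; elim: r => [|a r IH]; first by rewrite big_nil Q0 expr0 mul1r.
rewrite big_cons /= exprS; apply: le_trans (QB (hF a) IH) _.
have : 1 <= (4:R) ^+ size r by apply: exprn_ege1; lra.
nra.
Qed.

Lemma sq_le (c q : R) : 0 <= c -> c <= 1 -> 0 <= q -> c ^+ 2 * q <= q.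
Proof. by move=> c0 c1 q0; apply: ler_piMl => //; apply: exprn_ile1. Qed.

Lemma T_bound T : firmly_nonexpansive ip T -> forall v, Q (T v) <= 2 * Q v + 2 * Q (T 0).
Proof.
move=> hT v; have := hT v 0; rewrite /hnorm sqr_sqrtr // subr0 => h1.
have h2 := ip_le (T v - T 0) v.
have h3 : Q (T v - T 0) <= Q v by rewrite /Q in h2 *; lra.
by have := QB h3 (lexx (Q (T 0))); rewrite subrK.
Qed.

Lemma g_bound k g : 0 <= k -> lipschitz_with ip k g ->
  forall v, Q (g v) <= 2 * (k ^+ 2 * Q v) + 2 * Q (g 0).
Proof.
move=> k0 hg v; have := hg v 0; rewrite /hnorm subr0 => h.
have h3 : Q (g v - g 0) <= k ^+ 2 * Q v.
  rewrite /Q -(sqr_sqrtr (ipP (g v - g 0))) -(sqr_sqrtr (ipP v)) -exprMn.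
  by rewrite lerXn2r // ?nnegrE // mulr_ge0.
by have := QB h3 (lexx (Q (g 0))); rewrite subrK.
Qed.

Lemma main (M : nat) (T : 'I_M -> H -> H) (gradh : 'I_M -> H -> H) (L : 'I_M -> R)
  (theta beta alpha : nat -> R) (u : 'I_M -> H) (x z : nat -> H) (d y w : nat -> 'I_M -> H) :
  (0 < M)%N ->
  (forall i, 0 < L i /\ lipschitz_with ip (L i)^-1 (gradh i)) ->
  (forall i, firmly_nonexpansive ip (T i)) ->
  beta @ \oo --> (0 : R) ->
  (forall n, (1 <= n)%N -> [/\ 0 <= theta n < 1, 0 < beta n & 0 < alpha n <= 1]) ->
  (forall n, (1 <= n)%N ->
     [/\ z n = x n + theta n *: (x n - x n.-1),
         (forall i, d n.+1 i = - gradh i (z n) + beta n *: d n i),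
         (forall i, w n i = alpha n *: u i + (1 - alpha n) *: T i (y n i)) &
         x n.+1 = (M%:R)^-1 *: \sum_(i < M) w n i]) ->
  (forall i, bQ 1 (fun n => y n i)) ->
  (forall i, bQ 1 (fun n => T i (y n i))) /\
  bQ 0 x /\
  (forall i, bQ 1 (fun n => w n i)) /\
  bQ 0 z /\
  (forall i, bQ 1 (fun n => d n i)).
Proof.
move=> M0 hL hT hb hpar halg hy.
have [Cy hCy] := choice hy.
pose CT i := 2 * Cy i + 2 * Q (T i 0).
have hTy : forall i n, (1 <= n)%N -> Q (T i (y n i)) <= CT i.
  move=> i n n1; apply: le_trans (T_bound _ (hT i) _) _; rewrite /CT.
  by have := hCy i n n1; lra.
pose Cw i := 2 * Q (u i) + 2 * CT i.
have hw : forall i n, (1 <= n)%N -> Q (w n i) <= Cw i.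
  move=> i n n1; have [_ _ -> _] := halg n n1.
  have [_ _ /andP[a0 a1]] := hpar n n1.
  apply: (@QB _ _ (Q (u i)) (CT i)); rewrite QZ.
    by apply: sq_le => //; [exact: ltW | exact: ipP].
  apply: le_trans (hTy i n n1); apply: sq_le; [lra | lra | exact: ipP].
pose W := \sum_(i < M) `|Cw i|.
have W0 : 0 <= W by apply: sumr_ge0 => i _.
have hwW : forall i n, (1 <= n)%N -> Q (w n i) <= W.
  move=> i n n1; apply: le_trans (hw i n n1) _; apply: le_trans (ler_norm _) _.
  rewrite /W (bigD1 i) //= lerDl; exact: sumr_ge0.
have bx : bQ 0 x.
  apply: (bQ_shift 2); exists ((M%:R)^-1 ^+ 2 * (4 ^+ size (index_enum 'I_M) * W)).
  case=> [//|n] n2; have n1 : (1 <= n)%N by [].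
  have [_ _ _ ->] := halg n n1; rewrite QZ; apply: ler_wpM2l; first exact: sqr_ge0.
  by apply: Qsum => // i; apply: hwW.
split; first by move=> i; exists (CT i) => n n1; apply: hTy.
split; first exact: bx.
split; first by move=> i; exists (Cw i) => n n1; apply: hw.
have [Bx hBx] := bx.
have bz : bQ 0 z.
  apply: (bQ_shift 1); exists (2 * Bx + 2 * (2 * Bx + 2 * Bx)) => n n1.
  have [-> _ _ _] := halg n n1; have [/andP[t0 t1] _ _] := hpar n n1.
  apply: QB; first exact: hBx.
  rewrite QZ; have h := QB (hBx n isT) (eq_ind_r (fun q => q <= Bx) (hBx n.-1 isT) (QN _)).
  apply: le_trans h; apply: sq_le => //; [exact: ltW | exact: ipP].
split; first exact: bz.
have [Bz hBz] := bz.
move=> i; have [L0 hLi] := hL i.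
pose G := 2 * ((L i)^-1 ^+ 2 * Bz) + 2 * Q (gradh i 0).
have hG : forall n, Q (- gradh i (z n)) <= G.
  move=> n; rewrite QN; apply: le_trans (g_bound _ _ _ hLi _) _; first by rewrite invr_ge0 ltW.
  have := hBz n isT; have := sqr_ge0 (L i)^-1; rewrite /G; nra.
have /cvgrPdist_lt /(_ (1/2) ltac:(by rewrite divr_gt0)) [N _ HN] := hb.
pose N' := maxn N 1.
pose K := Num.max (4 * G) (Q (d N' i)).
have hK : forall m, Q (d (N' + m)%N i) <= K.
  elim=> [|m IH]; first by rewrite addn0 le_max lexx orbT.
  have n1 : (1 <= N' + m)%N by rewrite (leq_trans (leq_maxr N 1)) // leq_addr.
  have nN : (N <= N' + m)%N by rewrite (leq_trans (leq_maxl N 1)) // leq_addr.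
  rewrite addnS; have [_ -> _ _] := halg _ n1.
  have [_ b0 _] := hpar _ n1.
  have := HN _ nN; rewrite sub0r normrN gtr0_norm // => b2.
  have hK4 : 4 * G <= K by rewrite le_max lexx.
  have q0 := ipP (d (N' + m)%N i).
  apply: le_trans (QB (hG _) (lexx _)) _; rewrite QZ.
  have bb : beta (N' + m)%N ^+ 2 <= 1 / 4 by rewrite expr2; nra.
  have e1 : beta (N' + m)%N ^+ 2 * Q (d (N' + m)%N i) <= 1 / 4 * Q (d (N' + m)%N i).
    by apply: ler_wpM2r.
  move: IH e1; lra.
apply: (bQ_shift N'); exists K => n Nn.
by rewrite -(subnKC Nn); apply: hK.
Qed.

End Aux.
Theorem lemma5 (R : realType) (H : lmodType R) (ip : H -> H -> R)
  (M : nat) (f h : 'I_M -> H -> R) (gradh : 'I_M -> H -> H) (L : 'I_M -> R)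
  (T : 'I_M -> H -> H)
  (theta lam beta alpha : nat -> R) (sigma : R)
  (u : 'I_M -> H) (x z : nat -> H) (d y w : nat -> 'I_M -> H) :
  hilbert_space ip ->
  (0 < M)%N ->
  (* (A1) *)
  (forall i, hcontinuous ip (f i) /\ hconvex (f i)) ->
  (* (A2) *)
  (forall i, 0 < L i /\ hconvex (h i) /\ frechet_gradient ip (h i) (gradh i)
             /\ lipschitz_with ip (L i)^-1 (gradh i)) ->
  (* (A3) *)
  (forall i, firmly_nonexpansive ip (T i)) ->
  (* (A4) *)
  (exists p, forall i, fixed_point (T i) p) ->
  (exists xh, (forall i, fixed_point (T i) xh) /\
     forall v, (forall i, fixed_point (T i) v) ->
       \sum_(i < M) (f i xh + h i xh) <= \sum_(i < M) (f i v + h i v)) ->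
  (* Condition (C) *)
  decr_to_0 theta -> decr_to_0 lam -> decr_to_0 beta -> decr_to_0 alpha ->
  (forall n, (1 <= n)%N ->
     [/\ 0 <= theta n < 1,
         0 < lam n /\ (forall i, lam n <= 2 * L i),
         0 < beta n <= 1 & 0 < alpha n <= 1]) ->
  (* (C1) *)
  [series alpha k]_k @ \oo --> +oo ->
  (* (C2) *)
  (fun n => (alpha n.+1)^-1 * `|(lam n.+1)^-1 - (lam n)^-1|) @ \oo --> (0 : R) ->
  (* (C3) *)
  (fun n => (lam n.+1)^-1 * `|1 - alpha n / alpha n.+1|) @ \oo --> (0 : R) ->
  (* (C4) *)
  (fun n => alpha n / lam n) @ \oo --> (0 : R) ->
  (* (C5) *)
  (fun n => theta n / (alpha n.+1 * lam n.+1)) @ \oo --> (0 : R) ->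
  (* (C6) *)
  1 <= sigma -> (forall n, (1 <= n)%N -> lam n / lam n.+1 <= sigma) ->
  (* (C7) *)
  (fun n => beta n / alpha n.+1) @ \oo --> (0 : R) ->
  (* the algorithm *)
  (forall i, d 1%N i = - gradh i (z 0%N)) ->
  (forall n, (1 <= n)%N ->
     [/\ z n = x n + theta n *: (x n - x n.-1),
         (forall i, d n.+1 i = - gradh i (z n) + beta n *: d n i),
         (forall i, is_prox ip (lam n) (f i) (z n + lam n *: d n.+1 i) (y n i)),
         (forall i, w n i = alpha n *: u i + (1 - alpha n) *: T i (y n i)) &
         x n.+1 = (M%:R)^-1 *: \sum_(i < M) w n i]) ->
  (* boundedness of the y^{(i)} *)
  (forall i, bounded_from ip 1 (fun n => y n i)) ->
  (forall i, bounded_from ip 1 (fun n => T i (y n i))) /\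
  bounded_from ip 0 x /\
  (forall i, bounded_from ip 1 (fun n => w n i)) /\
  bounded_from ip 0 z /\
  (forall i, bounded_from ip 1 (fun n => d n i)).
Proof.
move=> [[ipS ipL ipP _] _] M0 _ hA2 hA3 _ _ _ _ [_ hb] _ hpar _ _ _ _ _ _ _ _ _ halg hy.
have := @main R H ip ipS ipL ipP M T gradh L theta beta alpha u x z d y w M0 _ hA3 hb _ _ _.
case.
- move=> i; have [? [_ [_ ?]]] := hA2 i; by split.
- move=> n n1; have [? _ /andP[? _] ?] := hpar n n1; by split.
- move=> n n1; have [? ? _ ? ?] := halg n n1; by split.
- move=> i; exact: bounded_bQ.
move=> hT [hx [hw [hz hd]]].
split; first by move=> i; apply: bQ_bounded.
split; first exact: bQ_bounded.
split; first by move=> i; apply: bQ_bounded.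
split; first exact: bQ_bounded.
by move=> i; apply: bQ_bounded.
Qed.
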